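(* Let $A$ be a non-negative $d\times d$ matrix and $M=(I-A^T)(I-A)$. Let $X$ be an entrywise strictly positive $d\times d$ matrix with $\rho(X)=1$. Let $\mathbf u,\mathbf v$ be its left and right leading eigenvectors, normalized by $\|\mathbf u\|=\|\mathbf v\|=1$. Suppose there is $r>0$ with $A=X+r\,\mathbf u\,\mathbf v^T$ (i.e. $X$ is a positive stationary point of problem (P)). Then $M\mathbf v=r^2\mathbf v$; thus $\mathbf v$ is an eigenvector of $M$, and $$X=A-(A-I)\mathbf v\,\mathbf v^T .$$
   Context: $\rho(\cdot)$ denotes spectral radius and $\|\cdot\|$ the Euclidean norm. Left and right leading eigenvectors satisfy $\mathbf u^TX=\mathbf u^T$ and $X\mathbf v=\mathbf v$; they are positive since $X>0$. Problem (P) is: minimize the Frobenius distance $\|X-A\|$ over non-negative $X$ with $\rho(X)\le1$. *)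

(* Defs.v *)
From HB Require Import structures.
From mathcomp Require Import all_boot all_order all_algebra.
Set Implicit Arguments. Unset Strict Implicit. Unset Printing Implicit Defensive.
Import Order.TTheory GRing.Theory Num.Theory.
Local Open Scope ring_scope.

(* Matrices are taken over a numeric algebraically closed field C (e.g. algC),
   so that all (complex) eigenvalues are available; the matrices in the
   statement have real (indeed non-negative) entries. *)

Definition is_spectral_radius (C : numClosedFieldType) (n : nat)
  (X : 'M[C]_n) (rho : C) : Prop :=
  (exists2 l : C, eigenvalue X l & `|l| = rho) /\
  (forall l : C, eigenvalue X l -> `|l| <= rho).

Definition sqnorm (C : numClosedFieldType) (n : nat) (w : 'cV[C]_n) : C :=
  \sum_(i < n) `|w i 0| ^+ 2.

(* Main.v *)
Require Import Defs.
From HB Require Import structures.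
From mathcomp Require Import all_boot all_order all_algebra.
Import Order.TTheory GRing.Theory Num.Theory.
Local Open Scope ring_scope.

Lemma unit_sq (C : numClosedFieldType) (d : nat) (v : 'cV[C]_d)
  (hp : forall i, 0 < v i 0) (hn : sqnorm v = 1) : v^T *m v = 1%:M.
Proof.
apply/matrixP => i j; rewrite !ord1 !mxE /=.
rewrite -hn /sqnorm; apply: eq_bigr => k _.
by rewrite !mxE ger0_norm ?expr2 // ltW.
Qed.

Theorem corollary2 (C : numClosedFieldType) (d : nat)
  (A X : 'M[C]_d) (u v : 'cV[C]_d) (r : C)
  (hA : forall i j, 0 <= A i j)
  (hX : forall i j, 0 < X i j)
  (hrho : is_spectral_radius X 1)
  (hu : u^T *m X = u^T) (hv : X *m v = v)
  (hupos : forall i, 0 < u i 0) (hvpos : forall i, 0 < v i 0)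
  (hun : sqnorm u = 1) (hvn : sqnorm v = 1)
  (hr : 0 < r)
  (hAX : A = X + r *: (u *m v^T)) :
  let M := (1%:M - A^T) *m (1%:M - A) in
  M *m v = r ^+ 2 *: v /\ X = A - (A - 1%:M) *m v *m v^T.
Proof.
have hvv := @unit_sq C d v hvpos hvn.
have huu := @unit_sq C d u hupos hun.
have hXu : X^T *m u = u by rewrite -[u]trmxK -trmx_mul hu.
have hAv : A *m v = v + r *: u.
  by rewrite hAX mulmxDl hv -scalemxAl -mulmxA hvv mulmx1.
have hAtu : A^T *m u = u + r *: v.
  rewrite hAX linearD /= linearZ /= trmx_mul trmxK mulmxDl hXu.
  by rewrite -scalemxAl -mulmxA huu mulmx1.
move=> M; split.
  rewrite /M -mulmxA [(1%:M - A) *m v]mulmxBl mul1mx hAv.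
  have -> : v - (v + r *: u) = - (r *: u) by rewrite opprD addrA subrr add0r.
  rewrite mulmxN mulmxBl mul1mx -!scalemxAr hAtu scalerDr scalerA.
  by rewrite opprB addrAC subrr add0r expr2.
rewrite mulmxBl mul1mx hAv.
have -> : v + r *: u - v = r *: u by rewrite addrC addKr.
by rewrite hAX -scalemxAl addrK.
Qed.
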